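(* For every $n\in\mathbb N$, the family of maps $\pi^n_X:\mathbb{T}_n(\mathbb{T}_{n+1}^-(X))\to\mathbb{T}_{n+1}(X)$, indexed by partial orders $X$, is a natural isomorphism $\pi^n:\mathbb{T}_n\circ\mathbb{T}_{n+1}^-\Rightarrow\mathbb{T}_{n+1}$; i.e. each $\pi^n_X$ is an isomorphism of partial orders and $\pi^n_Y\circ\mathbb{T}_n(\mathbb{T}_{n+1}^-(f))=\mathbb{T}_{n+1}(f)\circ\pi^n_X$ for every quasi embedding $f:X\to Y$.
   Context: A quasi embedding between partial orders is a function $f$ with $f(x)\leq f(y)\Rightarrow x\leq y$. For a partial order $X$, $M(X)$ is the set of finite multisets $[x_0,\dots,x_{m-1}]$ with elements from $X$, ordered by $[x_0,\dots,x_{m-1}]\leq_{M(X)}[y_0,\dots,y_{k-1}]$ iff there is an injection $g$ with $x_i\leq_X y_{g(i)}$ for all $i<m$. For $n\in\mathbb N$ and a partial order $X$, $\mathbb{T}_n(X)$ is generated by: $\overline x$ for each $x\in X$; $i\star\sigma$ for each $\sigma=[t_0,\dots,t_{m-1}]\in M(\mathbb{T}_n(X))$ and $i<n$. For $n>0$, $\mathbb{T}_n^-(X)=\{\overline x\mid x\in X\}\cup\{0\star\sigma\mid\sigma\in M(\mathbb{T}_n(X))\}\subseteq\mathbb{T}_n(X)$. The partial order $\leq_{\mathbb{T}_n(X)}$ is defined recursively: $\overline x\leq t$ iff either $t=\overline y$ with $x\leq_X y$, or $t=j\star[t_0,\dots,t_{m-1}]$ and $\overline x\leq t_l$ for some $l<m$;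 $i\star\sigma\leq t$ iff either $t=i\star\tau$ with $\sigma\leq_{M(\mathbb{T}_n(X))}\tau$, or $t=j\star[t_0,\dots,t_{m-1}]$ with $j\geq i$ and $i\star\sigma\leq t_l$ for some $l<m$; $\leq_{\mathbb{T}_n^-(X)}$ is its restriction. For a quasi embedding $f:X\to Y$, $\mathbb{T}_n(f)(\overline x)=\overline{f(x)}$, $\mathbb{T}_n(f)(i\star[t_0,\dots,t_{m-1}])=i\star[\mathbb{T}_n(f)(t_0),\dots,\mathbb{T}_n(f)(t_{m-1})]$, and $\mathbb{T}_n^-(f)$ is its restriction to $\mathbb{T}_n^-(X)$. Thus $\mathbb{T}_n(\mathbb{T}_{n+1}^-(X))$ consists of terms built from $\overline t$ ($t\in\mathbb{T}_{n+1}^-(X)$) with labels $i<n$. Define $\pi^n_X$ recursively by $\pi^n_X(\overline t)=t$ (using $\mathbb{T}_{n+1}^-(X)\subseteq\mathbb{T}_{n+1}(X)$) and $\pi^n_X(i\star[s_0,\dots,s_{m-1}])=(i+1)\star[\pi^n_X(s_0),\dots,\pi^n_X(s_{m-1})]$. *)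

(* Defs.v *)
From Stdlib Require Import List.
From mathcomp Require Import all_boot.
Set Implicit Arguments. Unset Strict Implicit. Unset Printing Implicit Defensive.

Record poset := Poset {
  pcar :> Type;
  ple : pcar -> pcar -> Prop;
  ple_refl : forall x, ple x x;
  ple_trans : forall x y z, ple x y -> ple y z -> ple x z;
  ple_anti : forall x y, ple x y -> ple y x -> x = y }.

Definition quasi_embedding (X Y : poset) (f : X -> Y) : Prop :=
  forall x y, ple (f x) (f y) -> ple x y.

(* Multisets are represented by lists; the order below is invariant
   under permutation, and the partial order T_n(X) is the quotient of this
   preorder by mutual comparability. *)
Inductive tm (n : nat) (A : Type) : Type :=
| Leaf : A -> tm n A
| Node : 'I_n -> list (tm n A) -> tm n A.
Arguments Leaf {n A}.
Arguments Node {n A}.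

(* The clause
   tle_node_node is sigma <=_{M(T_n)} tau, spelled out: an injection g from
   the positions of sigma to those of tau with sigma_k <= tau_(g k). *)
Inductive tle (n : nat) (A : Type) (leA : A -> A -> Prop) : tm n A -> tm n A -> Prop :=
| tle_leaf_leaf x y : leA x y -> tle leA (Leaf x) (Leaf y)
| tle_leaf_node x (j : 'I_n) ts t : In t ts -> tle leA (Leaf x) t -> tle leA (Leaf x) (Node j ts)
| tle_node_node (i : 'I_n) (s t : list (tm n A)) (g : nat -> nat) :
    (forall k k', k < size s -> k' < size s -> g k = g k' -> k = k') ->
    (forall k x, nth_error s k = Some x ->
       exists y, nth_error t (g k) = Some y /\ tle leA x y) ->
    tle leA (Node i s) (Node i t)
| tle_node_below (i : 'I_n) s (j : 'I_n) ts t : nat_of_ord i <= nat_of_ord j -> In t ts -> tle leA (Node i s) t ->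
    tle leA (Node i s) (Node j ts).

Fixpoint tmap (n : nat) (A B : Type) (f : A -> B) (t : tm n A) : tm n B :=
  match t with
  | Leaf x => Leaf (f x)
  | Node i ts => Node i (map (tmap f) ts)
  end.

Definition is_minus (n : nat) (A : Type) (t : tm n.+1 A) : bool :=
  match t with
  | Leaf _ => true
  | Node i _ => nat_of_ord i == 0
  end.

Definition Tminus (n : nat) (A : Type) := {t : tm n.+1 A | is_minus t}.

Definition Tminus_le (n : nat) (X : poset) (a b : Tminus n X) : Prop :=
  tle (@ple X) (proj1_sig a) (proj1_sig b).

Lemma is_minus_tmap (n : nat) (A B : Type) (f : A -> B) (t : tm n.+1 A) :
  is_minus t -> is_minus (tmap f t).
Proof. by case: t. Qed.

Definition Tminus_map (n : nat) (A B : Type) (f : A -> B) (a : Tminus n A) : Tminus n B :=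
  exist _ (tmap f (proj1_sig a)) (is_minus_tmap f (proj2_sig a)).

Fixpoint piT (n : nat) (A : Type) (s : tm n (Tminus n A)) : tm n.+1 A :=
  match s with
  | Leaf t => proj1_sig t
  | Node i ss => Node (lift ord0 i) (map (@piT n A) ss)
  end.

Definition tequiv (n : nat) (A : Type) (leA : A -> A -> Prop) (s t : tm n A) : Prop :=
  tle leA s t /\ tle leA t s.

(* g is an isomorphism between the partial orders obtained as quotients of the
   preorders (A, leA) and (B, leB): it reflects and preserves the order (hence
   is well defined and injective on the quotients) and is surjective up to
   equivalence. *)
Definition order_iso (A B : Type) (leA : A -> A -> Prop) (leB : B -> B -> Prop)
  (g : A -> B) : Prop :=
  (forall a a', leB (g a) (g a') <-> leA a a') /\
  (forall b, exists a, leB (g a) b /\ leB b (g a)).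

(* Main.v *)
Require Import Defs.
From Stdlib Require Import List.
From mathcomp Require Import all_boot.

Section Aux.
Set Implicit Arguments.

Lemma In_smap (A B : Type) (f : A -> B) (l : seq A) y :
  In y (map f l) <-> exists x, f x = y /\ In x l.
Proof.
elim: l => [|a l IH] /=; first by split=> // [[x []]].
split.
- case=> [<-|/IH [x [h1 h2]]]; first by exists a; auto.
  by exists x; auto.
- case=> x [h1 [->|h2]]; first by left.
  by right; apply/IH; exists x.
Qed.

Lemma nth_error_smap (A B : Type) (f : A -> B) (l : seq A) k :
  nth_error (map f l) k = option_map f (nth_error l k).
Proof. by elim: l k => [|a l IH] [|k] //=. Qed.

Lemma smap_ext_in (A B : Type) (f g : A -> B) (l : seq A) :
  (forall a, In a l -> f a = g a) -> map f l = map g l.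
Proof.
elim: l => [|a l IH] //= H; rewrite H; last by left.
by rewrite IH // => x hx; apply: H; right.
Qed.

Definition tm_ind' (n : nat) (A : Type) (P : tm n A -> Prop)
  (HL : forall x, P (Leaf x))
  (HN : forall i ts, (forall t, In t ts -> P t) -> P (Node i ts)) :
  forall t, P t :=
  fix IH (t : tm n A) : P t :=
    match t with
    | Leaf x => HL x
    | Node i ts => HN i ts
        ((fix F (l : seq (tm n A)) : forall u, In u l -> P u :=
           match l with
           | [::] => fun u (h : In u [::]) => False_ind _ h
           | a :: l' => fun u (h : In u (a :: l')) =>
               match h with
               | or_introl e => eq_ind a P (IH a) u e
               | or_intror h' => F l' u h'
               end
           end) ts)
    end.

Lemma tle_refl (n : nat) (A : Type) (leA : A -> A -> Prop) :
  (forall x, leA x x) -> forall t : tm n A, tle leA t t.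
Proof.
move=> Hr; elim/tm_ind' => [x|i ts IH]; first by constructor.
apply: (@tle_node_node _ _ _ i ts ts id) => // k x hk.
exists x; split => //; apply: IH; exact: nth_error_In hk.
Qed.

Lemma inv_leaf_leaf (n : nat) (A : Type) (leA : A -> A -> Prop) x y :
  tle (n := n) leA (Leaf x) (Leaf y) -> leA x y.
Proof. by move=> H; inversion H. Qed.

Lemma inv_node_leaf (n : nat) (A : Type) (leA : A -> A -> Prop) i s y :
  tle (n := n) leA (Node i s) (Leaf y) -> False.
Proof. by move=> H; inversion H. Qed.

Lemma inv_leaf_node (n : nat) (A : Type) (leA : A -> A -> Prop) x j ts :
  tle (n := n) leA (Leaf x) (Node j ts) -> exists t, In t ts /\ tle leA (Leaf x) t.
Proof. by move=> H; inversion H; subst; eauto. Qed.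

Lemma inv_node_node (n : nat) (A : Type) (leA : A -> A -> Prop) i s j t :
  tle (n := n) leA (Node i s) (Node j t) ->
  (i = j /\ exists g : nat -> nat,
     (forall k k', k < size s -> k' < size s -> g k = g k' -> k = k') /\
     (forall k x, nth_error s k = Some x ->
       exists y, nth_error t (g k) = Some y /\ tle leA x y)) \/
  (nat_of_ord i <= nat_of_ord j /\ exists u, In u t /\ tle leA (Node i s) u).
Proof. by move=> H; inversion H; subst; [left; split; eauto | right; eauto]. Qed.

End Aux.

Section Main.
Variable n : nat.
Variable X : poset.

Local Notation leN := (tle (n := n) (Tminus_le (n := n) (X := X))).
Local Notation leS := (tle (n := n.+1) (@ple X)).

Lemma lift0_val (i : 'I_n) : nat_of_ord (lift ord0 i) = i.+1.
Proof. by []. Qed.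

Lemma minus_below (t : Tminus n X) (j : 'I_n) ts :
  leS (proj1_sig t) (Node (lift ord0 j) ts) <-> exists u, In u ts /\ leS (proj1_sig t) u.
Proof.
case: t => [[x|i s] /= hm].
  split; first exact: inv_leaf_node.
  by case=> u [hu h]; apply: tle_leaf_node hu h.
split.
  case/inv_node_node => [[e _]|[_ //]].
  by move: hm; rewrite e lift0_val.
case=> u [hu h]; apply: tle_node_below hu h.
by move: hm => /eqP ->.
Qed.

Lemma key (a' : tm n (Tminus n X)) : forall a, leS (piT a) (piT a') <-> leN a a'.
Proof.
elim/tm_ind': a' => [t'|j ss' IH] [t|i ss] /=.
- split; first by move=> h; constructor.
  move=> h; have := inv_leaf_leaf h; exact.
- split => h; exfalso.
    case: t' h => [[y|j s] /= hm] h; first exact: inv_node_leaf h.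
    case/inv_node_node: h => [[e _]|[le _]].
      by move: hm; rewrite -e lift0_val.
    by move: hm le; rewrite lift0_val => /eqP ->.
  exact: inv_node_leaf h.
- rewrite minus_below; split.
    case=> u [hu h]; have [s' [es hs']] := proj1 (In_smap _ _ _) hu; subst u.
    eapply tle_leaf_node; first exact: hs'. exact/(IH s' hs').
  move=> hh; have [s' [hs' h]] := inv_leaf_node hh.
  exists (piT s'); split; first by apply/In_smap; eauto.
  exact: (proj2 (IH s' hs' (Leaf t)) h).
- split.
    case/inv_node_node => [[e [g [hg hp]]]|[le [u [/In_smap [s' [<- hs']] h]]]].
      have -> : i = j by apply: (lift_inj e).
      apply: (@tle_node_node _ _ _ j ss ss' g).
        by move=> k k'; rewrite -(size_map (@piT n X)); apply: hg.
      move=> k x hk.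
      have := hp k (piT x); rewrite nth_error_smap hk => /(_ erefl) [y [hy hxy]].
      rewrite nth_error_smap in hy.
      case E: (nth_error ss' (g k)) hy => [y'|] //= [ey]; subst y.
      exists y'; split => //; apply/(IH y' (nth_error_In _ _ E)); exact: hxy.
    eapply tle_node_below; [by move: le; rewrite !lift0_val|exact: hs'|].
    exact/(IH s' hs' (Node i ss)).
  case/inv_node_node => [[<- [g [hg hp]]]|[le [u [hu h]]]].
    apply: (@tle_node_node _ _ _ _ _ _ g).
      by rewrite size_map.
    move=> k x; rewrite nth_error_smap.
    case E: (nth_error ss k) => [x'|] //= [<-].
    have [y' [hy hxy]] := hp k x' E.
    exists (piT y'); rewrite nth_error_smap hy; split => //.
    exact/(IH y' (nth_error_In _ _ hy)).
  apply: tle_node_below; first by rewrite !lift0_val.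
    by apply/In_smap; exists u; split; [reflexivity|exact: hu].
  exact/(IH u hu (Node i ss)).
Qed.

Fixpoint pre (t : tm n.+1 X) : tm n (Tminus n X) :=
  match t with
  | Leaf x => Leaf (exist _ (Leaf x) erefl)
  | Node i ts =>
    match unlift ord0 i with
    | Some j => Node j (map pre ts)
    | None => Leaf (exist _ (Node ord0 ts) erefl)
    end
  end.

Lemma pre_ok (t : tm n.+1 X) : piT (pre t) = t.
Proof.
elim/tm_ind': t => [x|i ts IH] //=.
case: unliftP => [j ->|->] //=.
congr Node.
rewrite -map_comp (@smap_ext_in _ _ _ id) ?map_id // => a ha /=.
Qed.

End Main.

Lemma nat_eq (n : nat) (A B : Type) (f : A -> B) (s : tm n (Tminus n A)) :
  piT (tmap (Tminus_map (n := n) f) s) = tmap f (piT s).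
Proof.
elim/tm_ind': s => [t|i ss IH] //=.
congr Node; rewrite -!map_comp; apply: smap_ext_in => a ha /=; exact: IH.
Qed.

Theorem proposition6p2 (n : nat) :
  (forall X : poset,
     order_iso (tle (n := n) (Tminus_le (n := n) (X := X)))
               (tle (n := n.+1) (@ple X)) (piT (n := n) (A := X))) /\
  (forall (X Y : poset) (f : X -> Y), quasi_embedding f ->
     forall s : tm n (Tminus n X),
       tequiv (@ple Y) (piT (tmap (Tminus_map (n := n) f) s)) (tmap f (piT s))).
Proof.
split.
  move=> X; split; first by move=> a a'; exact: key.
  move=> b; exists (@pre n X b); rewrite pre_ok; split; apply: tle_refl; exact: ple_refl.
move=> X Y f _ s; rewrite nat_eq; split; apply: tle_refl; exact: ple_refl.
Qed.
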